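(* Let $n=rk$, let $f:\mathbb{F}_{2^n}\to\mathbb{F}_{2^k}$, let $L:\mathbb{F}_{2^n}\to\mathbb{F}_{2^n}$ be an $\mathbb{F}_{2^k}$-linear permutation of $\mathbb{F}_{2^n}$, and let $g:\mathbb{F}_{2^k}\to\mathbb{F}_{2^k}$ be a permutation. Let $i\in\{0,\dots,k-1\}$, $\gamma\in\mathbb{F}_{2^n}^*$ and $a\in\mathbb{F}_{2^k}^*$ be such that $f(x+u\gamma)+f(x)=u^{2^i}a$ for all $x\in\mathbb{F}_{2^n}$ and all $u\in\mathbb{F}_{2^k}$. Then $$\phi(x)=L(x)+L(\gamma)\left(g(f(x))+\frac{f(x)}{a}\right)^{2^{n-i}}$$ is a permutation of $\mathbb{F}_{2^n}$, and its inverse is $$\phi^{-1}(x)=L^{-1}(x)+\gamma\, a^{-2^{n-i}}\left(g^{-1}\!\left(\frac{f(L^{-1}(x))}{a}\right)+f(L^{-1}(x))\right)^{2^{n-i}}.$$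
   Context: An $\mathbb{F}_{2^k}$-linear function on $\mathbb{F}_{2^n}$ is one of the form $L(x)=\sum_{j=0}^{r-1}\lambda_j x^{2^{kj}}$ with $\lambda_j\in\mathbb{F}_{2^n}$; $L^{-1}$ and $g^{-1}$ denote compositional inverses. *)

(* Defs.v *)
From HB Require Import structures.
From mathcomp Require Import all_boot all_order all_algebra all_field.
Unset Printing Implicit Defensive.
Import GRing.Theory.
Local Open Scope ring_scope.

(* The subfield F_{2^k} of a field F (of characteristic 2, with k | n):
   the elements fixed by x |-> x^(2^k). *)
Definition subF (F : fieldType) (k : nat) : pred F :=
  fun x => x ^+ (2 ^ k) == x.

Definition Fk_linear (F : fieldType) (k r : nat) (L : F -> F) : Prop :=
  exists lam : 'I_r -> F, forall x, L x = \sum_(j < r) lam j * x ^+ (2 ^ (k * j)).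

(* Main.v *)
Require Import Defs.
From HB Require Import structures.
From mathcomp Require Import all_boot all_order all_algebra all_field.
Import GRing.Theory.
Local Open Scope ring_scope.

Section Helpers.
Variables (F : finFieldType) (hchar : 2%N \in [pchar F]).

Lemma frobD m (x y : F) : (x + y) ^+ (2 ^ m) = x ^+ (2 ^ m) + y ^+ (2 ^ m).
Proof.
apply: exprDn_pchar; rewrite pnatX (pnatE _ (isT : prime 2)) hchar //.
Qed.

Lemma subF_pow k j (u : F) : u \in subF F k -> u ^+ (2 ^ (k * j)) = u.
Proof.
move=> /eqP hu; elim: j => [|j IH]; first by rewrite muln0 expn0 expr1.
by rewrite mulnS expnD exprM hu IH.
Qed.

Lemma subFD k (x y : F) : x \in subF F k -> y \in subF F k -> x + y \in subF F k.
Proof. by move=> /eqP hx /eqP hy; apply/eqP; rewrite frobD hx hy. Qed.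

Lemma subFM k (x y : F) : x \in subF F k -> y \in subF F k -> x * y \in subF F k.
Proof. by move=> /eqP hx /eqP hy; apply/eqP; rewrite exprMn hx hy. Qed.

Lemma subFV k (x : F) : x \in subF F k -> x^-1 \in subF F k.
Proof. by move=> /eqP hx; apply/eqP; rewrite exprVn hx. Qed.

Lemma subFX k m (x : F) : x \in subF F k -> x ^+ m \in subF F k.
Proof. by move=> /eqP hx; apply/eqP; rewrite exprAC hx. Qed.

Lemma Llin k r (L : F -> F) : Fk_linear F k r L ->
  forall x y u, u \in subF F k -> L (x + u * y) = L x + u * L y.
Proof.
move=> [lam hL] x y u hu; rewrite !hL mulr_sumr -big_split /=.
apply: eq_bigr => j _; rewrite frobD exprMn (subF_pow k j u hu).
by rewrite mulrDr mulrCA.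
Qed.

End Helpers.

Theorem proposition8 (F : finFieldType) (r k : nat)
  (hchar : 2%N \in [pchar F]) (hcard : #|F| = (2 ^ (r * k))%N)
  (f : F -> F) (hf : forall x, f x \in subF F k)
  (L : F -> F) (hLlin : Fk_linear F k r L) (hLbij : bijective L)
  (g : F -> F) (hgK : {in subF F k, forall y, g y \in subF F k})
  (hginj : {in subF F k &, injective g})
  (i : nat) (hi : (i < k)%N)
  (gamma : F) (hgamma : gamma != 0)
  (a : F) (haK : a \in subF F k) (ha : a != 0)
  (hdiff : forall x u, u \in subF F k ->
     f (x + u * gamma) + f x = u ^+ (2 ^ i) * a) :
  let n := (r * k)%N in
  let phi := fun x => L x + L gamma * (g (f x) + f x / a) ^+ (2 ^ (n - i)) in
  bijective phi /\
  (forall (Linv ginv : F -> F),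
     cancel L Linv -> cancel Linv L ->
     {in subF F k, forall y, ginv y \in subF F k} ->
     {in subF F k, cancel g ginv} -> {in subF F k, cancel ginv g} ->
     let psi := fun x => Linv x + gamma * (a ^+ (2 ^ (n - i)))^-1 *
          (ginv (f (Linv x) / a) + f (Linv x)) ^+ (2 ^ (n - i)) in
     cancel phi psi /\ cancel psi phi).
Proof.
move=> n phi.
have r0 : (0 < r)%N.
  rewrite lt0n; apply/negP => /eqP r0; move: hcard; rewrite r0 => hc.
  have : (#|F| <= 1)%N by rewrite hc.
  move/fintype_le1P => /(_ 0) h.
  by move: (oner_neq0 F); rewrite (h 1) eqxx.
have hin : (i <= n)%N.
  rewrite /n; apply: leq_trans (ltnW hi) _; by rewrite leq_pmull.
pose T x := g (f x) + f x / a.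
pose v x := T x ^+ (2 ^ (n - i)).
have TK x : T x \in subF F k.
  by apply: subFD => //; [apply: hgK | apply: subFM => //; apply: subFV].
have vK x : v x \in subF F k by apply: subFX.
have vi x : v x ^+ (2 ^ i) = T x.
  by rewrite /v -exprM -expnD subnK // /n -hcard expf_card.
have phiE x : phi x = L (x + v x * gamma).
  by rewrite (@Llin F hchar k r L hLlin) // mulrC.
have key x : f (x + v x * gamma) = a * g (f x).
  have := hdiff x (v x) (vK x); rewrite vi => h.
  have -> : f (x + v x * gamma) = T x * a + f x.
    by rewrite -h -addrA addrr_pchar2 // addr0.
  by rewrite /T mulrDl divfK // -addrA addrr_pchar2 // addr0 mulrC.
have phi_inj : injective phi.
  move=> x y; rewrite !phiE => /(bij_inj hLbij) e.
  have := key x; rewrite e key => /mulfI => /(_ ha) /hginj.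
  move=> /(_ (hf _) (hf _)) efx.
  have evx : v x = v y by rewrite /v /T efx.
  by move: e; rewrite evx => /addIr.
have phi_bij : bijective phi by apply: injF_bij.
split=> // Linv ginv LK LKinv ginvK gK gKinv psi.
have c1 : cancel phi psi.
  move=> x; rewrite /psi phiE LK key.
  have -> : a * g (f x) / a = g (f x) by rewrite mulrC mulKf.
  rewrite gK ?hf //.
  have -> : f x + a * g (f x) = a * T x.
    by rewrite /T mulrDr mulrCA divff // mulr1 addrC.
  rewrite exprMn -/(v x) mulrA -(mulrA gamma) mulVf ?mulr1 ?expf_neq0 //.
  by rewrite -addrA (mulrC gamma) addrr_pchar2 // addr0.
split=> //.
case: phi_bij => phinv h1 h2.
move=> y; have -> : psi y = phinv y by rewrite -{1}(h2 y) c1.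
by rewrite h2.
Qed.
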